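(* (i) A legal abstract path has weight $2$ if and only if it has the form Ia or the form Ib, where: form Ia means it consists of exactly two nodes, both interior, joined by one arrow; form Ib means it has exactly one boundary node $v$ and every other node is an interior node adjacent to $v$. (ii) A boundary abstract path has length $2$ if and only if it has the form II, i.e. consists of exactly two boundary nodes joined by one arrow.
   Context: $\mathbb F=\{0,1\}$, $\mathbb N=\{0,1,2,\dots\}$. Abstract vertex types: $o$ (interior), $u$ (unstable), $s$ (stable). An abstract edge is $\varepsilon=(\mu,(o_1,u_1,s_1),(o_2,u_2,s_2))\in\mathbb F\times\mathbb N^3\times\mathbb N^3$ with: if $\mu=0$ then $s_1=u_2=0$; if $\mu=1$ then $o_1=o_2=0$ (interior if $\mu=0$, boundary if $\mu=1$). Weight: $w(\varepsilon)=1$ if $\mu=0$, $2-s_1-u_2$ if $\mu=1$. An abstract path $\tau=(T,\tau,\sigma)$: a non-empty finite directed tree $T=(V,E)$ (nodes, arrows), $\tau:V\to$ abstract edges, $\sigma:E\to\{o,u,s\}$, such that for each node $v$ and type $X$, $X_1(v)\ge|\{e:t(e)=v,\sigma(e)=X\}|$ and $X_2(v)\ge|\{e:s(e)=v,\sigma(e)=X\}|$, with $X_i(v)$ the entries of $\tau(v)$. Ends: $X_1(\tau)=\sum_vX_1(v)-|\sigma^{-1}(X)|$, $X_2(\tau)=\sum_vX_2(v)-|\sigma^{-1}(X)|$. A node is interior or boundary according to $\mu(v)$. $\tau$ is legal if $s_1(\tau)=u_2(\tau)=0$; it is a boundary path if all nodes are boundary. Length = number of nodes; weight $w(\tau)=\sum_vw(\tau(v))$.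 *)

(* Defs.v *)
From HB Require Import structures.
From mathcomp Require Import all_boot all_order all_algebra.
Set Implicit Arguments. Unset Strict Implicit. Unset Printing Implicit Defensive.
Import GRing.Theory Num.Theory.

(* Abstract vertex types: o (interior), u (unstable), s (stable). *)
Inductive vtype := tO | tU | tS.

Definition vtype_to_nat (X : vtype) : nat :=
  match X with tO => 0 | tU => 1 | tS => 2 end.
Definition nat_to_vtype (n : nat) : option vtype :=
  match n with 0 => Some tO | 1 => Some tU | 2 => Some tS | _ => None end.
Lemma vtype_natK : pcancel vtype_to_nat nat_to_vtype.
Proof. by case. Qed.
HB.instance Definition _ := Countable.copy vtype (pcan_type vtype_natK).

(* An (candidate) abstract edge (mu, (o1,u1,s1), (o2,u2,s2)); mu = false
   encodes 0 (interior), mu = true encodes 1 (boundary). *)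
Record aedge := AEdge {
  ae_mu : bool;
  ae_o1 : nat; ae_u1 : nat; ae_s1 : nat;
  ae_o2 : nat; ae_u2 : nat; ae_s2 : nat }.

Definition is_aedge (a : aedge) : bool :=
  if ae_mu a then (ae_o1 a == 0) && (ae_o2 a == 0)
  else (ae_s1 a == 0) && (ae_u2 a == 0).

Definition X1 (X : vtype) (a : aedge) : nat :=
  match X with tO => ae_o1 a | tU => ae_u1 a | tS => ae_s1 a end.
Definition X2 (X : vtype) (a : aedge) : nat :=
  match X with tO => ae_o2 a | tU => ae_u2 a | tS => ae_s2 a end.

Definition aedge_weight (a : aedge) : int :=
  if ae_mu a then (2%:Z - (ae_s1 a)%:Z - (ae_u2 a)%:Z)%R else 1%R.

Section Paths.
Variables (V E : finType) (src tgt : E -> V).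

Definition adjacent (x y : V) : bool :=
  [exists e, ((src e == x) && (tgt e == y)) || ((src e == y) && (tgt e == x))].

Fixpoint walk_end (x : V) (es : seq E) : option V :=
  match es with
  | [::] => Some x
  | e :: es' =>
      if src e == x then walk_end (tgt e) es'
      else if tgt e == x then walk_end (src e) es'
      else None
  end.

Definition acyclic : Prop :=
  forall (x : V) (es : seq E), es != [::] -> uniq es -> walk_end x es <> Some x.

Definition uconnected : Prop := forall x y : V, connect adjacent x y.

Definition is_dtree : Prop := 0 < #|V| /\ uconnected /\ acyclic.

Variables (tau : V -> aedge) (sigma : E -> vtype).

Definition is_abstract_path : Prop :=
  [/\ is_dtree,
      (forall v, is_aedge (tau v)),
      (forall v X, #|[set e | (tgt e == v) && (sigma e == X)]| <= X1 X (tau v)) &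
      (forall v X, #|[set e | (src e == v) && (sigma e == X)]| <= X2 X (tau v))].

Definition ends1 (X : vtype) : int :=
  ((\sum_v (X1 X (tau v))%:Z) - (#|[set e | sigma e == X]|)%:Z)%R.
Definition ends2 (X : vtype) : int :=
  ((\sum_v (X2 X (tau v))%:Z) - (#|[set e | sigma e == X]|)%:Z)%R.

Definition is_legal : Prop := ends1 tS = 0%R /\ ends2 tU = 0%R.

Definition is_boundary_path : Prop := forall v, ae_mu (tau v).

Definition path_length : nat := #|V|.

Definition path_weight : int := (\sum_v aedge_weight (tau v))%R.

Definition formIa : Prop :=
  exists (x y : V) (e : E),
    [/\ x != y, (forall v, v = x \/ v = y), (forall e', e' = e),
        src e = x /\ tgt e = y &
        ~~ ae_mu (tau x) /\ ~~ ae_mu (tau y)].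

Definition formIb : Prop :=
  exists v : V, ae_mu (tau v) /\
    (forall w, w != v -> ~~ ae_mu (tau w) /\
       exists e, (src e = v /\ tgt e = w) \/ (src e = w /\ tgt e = v)).

Definition formII : Prop :=
  exists (x y : V) (e : E),
    [/\ x != y, (forall v, v = x \/ v = y), (forall e', e' = e),
        src e = x /\ tgt e = y &
        ae_mu (tau x) /\ ae_mu (tau y)].

End Paths.

(* Main.v *)
Require Import Defs.
From mathcomp Require Import all_boot all_order all_algebra zify.
Set Implicit Arguments. Unset Strict Implicit. Unset Printing Implicit Defensive.
Import GRing.Theory Num.Theory.

Section Forest.
Variables (V E : finType) (src tgt : E -> V).
Hypothesis acyc : acyclic src tgt.

Definition inc (e : E) (y : V) := (src e == y) || (tgt e == y).

Lemma walk_cat x es1 es2 :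
  walk_end src tgt x (es1 ++ es2) =
  obind (fun z => walk_end src tgt z es2) (walk_end src tgt x es1).
Proof.
elim: es1 x => [|e es IH] x //=.
by case: ifP => _; [|case: ifP] => //.
Qed.

Lemma no_loop e : src e != tgt e.
Proof.
apply/negP => /eqP H.
apply: (acyc (x := tgt e) (es := [:: e])) => //=.
by rewrite H eqxx.
Qed.

Lemma walk_one z e y : walk_end src tgt z [:: e] = Some y -> inc e y.
Proof.
rewrite /= /inc; case: ifP => [_ [<-]|_]; first by rewrite eqxx orbT.
by case: ifP => // _ [<-]; rewrite eqxx.
Qed.

Lemma closed_incident z e' rest y :
  walk_end src tgt z (e' :: rest) = Some y -> inc e' y ->
  uniq (e' :: rest) -> rest != [::] -> False.
Proof.
move=> W I U R.
have [zy|zy] := eqVneq z y.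
  by subst z; apply: (acyc (x := y) (es := e' :: rest)).
move: W I; rewrite /= /inc.
case: ifP => [/eqP sz|_].
  move=> W; rewrite sz (negbTE zy) /= => /eqP ty; subst.
  apply: (acyc (x := tgt e') (es := rest)) => //; by case/andP: U.
case: ifP => // /eqP tz W; rewrite tz (negbTE zy) orbF => /eqP sy; subst.
apply: (acyc (x := src e') (es := rest)) => //; by case/andP: U.
Qed.

Definition trail (F : {set E}) k :=
  exists x es y, [/\ size es = k, uniq es, all (fun e => e \in F) es &
                     walk_end src tgt x es = Some y].

Definition leaf (F : {set E}) :=
  exists y e, [/\ e \in F, inc e y & forall e', e' \in F -> inc e' y -> e' = e].

Lemma trail_ext F k : trail F k.+1 -> leaf F \/ trail F k.+2.
Proof.
case=> x [es [y [Hs U A W]]].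
case/lastP: es Hs U A W => [|es e]; first by [].
move=> Hs U A W.
move: W; rewrite -cats1 walk_cat; case Hz: (walk_end src tgt x es) => [z|] //= W.
have Iey := walk_one W.
have eF : e \in F by move: A; rewrite all_rcons => /andP[].
case: (boolP [exists e', [&& e' \in F, inc e' y & e' != e]]); last first.
  move=> /existsPn H; left; exists y, e; split => // e' e'F Ie'.
  by have := H e'; rewrite e'F Ie' /= negbK => /eqP.
case/existsP=> e' /and3P[e'F Ie' ne'].
case: (boolP (e' \in es)) => [e'es|e'es].
  exfalso; case/splitPr: e'es U A Hz W => p1 p2 U A Hz W.
  move: Hz; rewrite walk_cat; case Hw: (walk_end src tgt x p1) => [w|] //= Hz.
  apply: (@closed_incident w e' (rcons p2 e) y) => //.
  - by rewrite -cats1 -cat_cons walk_cat /= Hz.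
  - move: U; rewrite rcons_cat rcons_cons cat_uniq => /and3P[_ _]; done.
  - by case: p2 {U A Hz W}.
right; move: Ie'; rewrite /inc.
have U' : uniq (rcons (rcons es e) e').
  rewrite rcons_uniq U andbT -cats1 mem_cat negb_or e'es /= mem_seq1 ne' //.
have A' : all (fun e => e \in F) (rcons (rcons es e) e') by rewrite all_rcons e'F A.
case/orP => /eqP H.
  exists x, (rcons (rcons es e) e'), (tgt e'); split => //; first by rewrite size_rcons Hs.
  by rewrite -!cats1 walk_cat walk_cat Hz /= W /= H eqxx.
exists x, (rcons (rcons es e) e'), (if src e' == y then tgt e' else src e'); split => //.
  by rewrite size_rcons Hs.
rewrite -!cats1 walk_cat walk_cat Hz /= W /= H eqxx.
by case: ifP.
Qed.

Lemma trail_bound F k : trail F k -> k <= #|F|.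
Proof.
case=> x [es [y [<- U A _]]].
rewrite cardE; apply: uniq_leq_size => // e ees; rewrite mem_enum.
by move/allP: A; apply.
Qed.

Lemma leaf_exists F : F != set0 -> leaf F.
Proof.
case/set0Pn=> e eF.
suff: forall k, leaf F \/ trail F k.+1.
  case/(_ #|F|) => // /trail_bound; by rewrite ltnn.
elim=> [|k [|IH]]; [right| by left | exact: trail_ext].
exists (src e), [:: e], (tgt e); split => //=; first by rewrite eF.
by rewrite eqxx.
Qed.

Lemma forest_card n (A : {set V}) (F : {set E}) : #|A| = n.+1 ->
  (forall e, e \in F -> (src e \in A) && (tgt e \in A)) -> #|F| < #|A|.
Proof.
elim: n A F => [|n IH] A F HA HF;
  (case: (eqVneq F set0) => [->|FN]; first by rewrite cards0 HA);
  case: (leaf_exists FN) => y [e [eF Iey Hl]];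
  have yA : y \in A by move: Iey (HF e eF); rewrite /inc => /orP[] /eqP -> /andP[].
all: have [Hcd _] : (#|A| = (y \in A) + #|A :\ y|) /\ True by rewrite -cardsD1.
all: have Hpos : 0 < #|A :\ y|.
all: try (apply/card_gt0P; move: Iey (HF e eF) (no_loop e); rewrite /inc => /orP[] /eqP <- /andP[H1 H2] Hn;
  [exists (tgt e) | exists (src e)]; rewrite !inE ?H1 ?H2 // ?andbT // eq_sym //).
  by move: Hcd Hpos; rewrite HA yA add1n => -[<-].
have [HcF _] : (#|F| = (e \in F) + #|F :\ e|) /\ True by rewrite -cardsD1.
rewrite HcF eF Hcd yA !add1n ltnS.
  apply: (IH _ _ _) => [|e'].
    by move: Hcd; rewrite HA yA add1n => -[].
  rewrite !inE => /andP[ne e'F].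
  have: ~~ inc e' y by apply/negP => I; move: ne; rewrite (Hl _ e'F I) eqxx.
  rewrite /inc negb_or => /andP[-> ->] /=; exact: HF.
Qed.

Lemma forest_bound : #|V| > 0 -> #|E| < #|V|.
Proof.
rewrite -!cardsT => H; apply: (forest_card (n := #|[set: V]|.-1)) => [|e _].
  by rewrite prednK.
by rewrite !inE.
Qed.

End Forest.


Section Main.
Variables (V E : finType) (src tgt : E -> V) (tau : V -> aedge) (sigma : E -> vtype).
Hypothesis HP : is_abstract_path src tgt tau sigma.

Ltac clia := try set kV := #|V|; try set kE := #|E|; lia.

Lemma HT : [/\ 0 < #|V|, uconnected src tgt & acyclic src tgt].
Proof. by case: HP => -[a [b c]]. Qed.

Lemma mE : #|E| < #|V|.
Proof. case: HT => h _ ac; exact: (forest_bound ac h). Qed.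

Lemma adj_edge x y : x != y -> exists e z,
  (src e = x /\ tgt e = z) \/ (src e = z /\ tgt e = x).
Proof.
case: HT => _ C _ nxy; case/connectP: (C x y) => -[|z p] /=.
  by move=> _ eq; rewrite eq eqxx in nxy.
case/andP=> /existsP[e] H _ _; exists e, z.
by case/orP: H => /andP[/eqP -> /eqP ->]; [left|right].
Qed.

Lemma two_nodes : #|V| = 2 -> exists e,
  [/\ src e != tgt e, forall e', e' = e & forall v, v = src e \/ v = tgt e].
Proof.
move=> H2.
have : 1 < #|V| by rewrite H2.
case/card_gt1P => x [y [_ _ nxy]].
case: (adj_edge nxy) => e [z _].
exists e; have nl : src e != tgt e by case: HT => _ _ ac; exact: no_loop.
split => //.
  have: #|E| <= 1 by have := mE; rewrite H2.
  move/card_le1_eqP => Hle e'; symmetry; apply: Hle; by [].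
move=> v.
have Hs : [set src e; tgt e] = [set: V].
  apply/setP/subset_cardP; last by apply/subsetP => w; rewrite inE.
  by rewrite cards2 nl cardsT H2.
have : v \in [set src e; tgt e] by rewrite Hs inE.
by rewrite !inE => /orP[] /eqP; [left|right].
Qed.

Lemma aedgeV v : is_aedge (tau v).
Proof. by case: HP. Qed.

Lemma interior0 v : ~~ ae_mu (tau v) -> ae_s1 (tau v) = 0 /\ ae_u2 (tau v) = 0.
Proof. by move=> H; move: (aedgeV v); rewrite /is_aedge (negbTE H) => /andP[/eqP -> /eqP ->]. Qed.

Lemma set_empty (A : {set E}) e : e \in A -> #|A| <= 0 -> False.
Proof. move=> eA; rewrite leqn0 cards_eq0 => /eqP A0; by rewrite A0 inE in eA. Qed.

Lemma bd_noO v e : ae_mu (tau v) -> (src e = v \/ tgt e = v) -> sigma e != tO.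
Proof.
move=> Hv Hi; apply/negP => /eqP sO.
have [o1 o2] : ae_o1 (tau v) = 0 /\ ae_o2 (tau v) = 0.
  by move: (aedgeV v); rewrite /is_aedge Hv => /andP[/eqP -> /eqP ->].
case: HP => _ _ H1 H2.
case: Hi => Hi.
  apply: (@set_empty _ e _ (leq_trans (H2 v tO) _)); first by rewrite inE Hi sO !eqxx.
  by rewrite /= o2.
apply: (@set_empty _ e _ (leq_trans (H1 v tO) _)); first by rewrite inE Hi sO !eqxx.
by rewrite /= o1.
Qed.

Lemma S_tgt e : sigma e = tS -> ae_mu (tau (tgt e)).
Proof.
move=> sS; apply/negPn/negP => H; case: (interior0 H) => s1 _.
case: HP => _ _ H1 _.
apply: (@set_empty _ e _ (leq_trans (H1 (tgt e) tS) _)); first by rewrite inE sS !eqxx.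
by rewrite /= s1.
Qed.

Lemma U_src e : sigma e = tU -> ae_mu (tau (src e)).
Proof.
move=> sU; apply/negPn/negP => H; case: (interior0 H) => _ u2.
case: HP => _ _ _ H2.
apply: (@set_empty _ e _ (leq_trans (H2 (src e) tU) _)); first by rewrite inE sU !eqxx.
by rewrite /= u2.
Qed.

Definition cS := #|[set e | sigma e == tS]|.
Definition cU := #|[set e | sigma e == tU]|.
Definition Bd := [set v | ae_mu (tau v)].
Ltac clia2 := try set kB := #|Bd|; clia.

Lemma cSU : cS + cU = #|[set e | sigma e != tO]|.
Proof.
rewrite /cS /cU -cardsUI.
have -> : [set e | sigma e == tS] :&: [set e | sigma e == tU] = set0.
  by apply/setP => e; rewrite !inE; case: (sigma e).
rewrite cards0 addn0; apply: eq_card => e; rewrite !inE; by case: (sigma e).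
Qed.

Lemma cSU_le : cS + cU <= #|E|.
Proof. by rewrite cSU max_card. Qed.

Lemma Posz_sum (F : V -> nat) : Posz (\sum_v F v)%N = (\sum_v Posz (F v))%R.
Proof. exact: (big_morph _ PoszD (erefl _)). Qed.

Lemma weight_formula : is_legal tau sigma ->
  path_weight tau = (Posz (#|V| + #|Bd|) - Posz (cS + cU))%R.
Proof.
case=> L1 L2.
have eS : (\sum_v ae_s1 (tau v))%N = cS.
  apply/eqP; rewrite -eqz_nat Posz_sum -subr_eq0; exact/eqP.
have eU : (\sum_v ae_u2 (tau v))%N = cU.
  apply/eqP; rewrite -eqz_nat Posz_sum -subr_eq0; exact/eqP.
have pw v : aedge_weight (tau v) =
   (Posz (1 + ae_mu (tau v))%N - Posz (ae_s1 (tau v) + ae_u2 (tau v))%N)%R.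
  rewrite /aedge_weight; case: (boolP (ae_mu (tau v))) => H.
    by rewrite !PoszD opprD addrA.
  by case: (interior0 H) => -> ->; rewrite subr0.
rewrite /path_weight (eq_bigr _ (fun v _ => pw v)) sumrB -!Posz_sum.
rewrite !big_split /= -eS -eU; congr (_ - _)%R.
rewrite sum1_card; congr (Posz (_ + _)).
rewrite /Bd -sum1_card [RHS]big_mkcond /=; apply: eq_bigr => v _; rewrite inE; by case: (ae_mu _).
Qed.


Lemma noBd_c0 : (forall v, ~~ ae_mu (tau v)) -> cS = 0 /\ cU = 0.
Proof.
move=> H; rewrite /cS /cU; split; apply/eqP; rewrite cards_eq0; apply/eqP/setP => e;
  rewrite !inE; apply/negP => /eqP.
  by move/S_tgt; rewrite (negbTE (H _)).
by move/U_src; rewrite (negbTE (H _)).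
Qed.

Lemma part1 : is_legal tau sigma ->
  (path_weight tau = Posz 2 <-> formIa src tgt tau \/ formIb src tgt tau).
Proof.
move=> L; rewrite weight_formula //.
have mE' := mE; have cle := cSU_le.
split.
- move=> /eqP; rewrite subr_eq -PoszD => /eqP [] Heq.
  have : #|Bd| <= 1 by move: Heq mE' cle; clia2.
  rewrite leq_eqVlt ltnS leqn0 => /orP[H1|H0].
  + right; case/cards1P: (H1) => v Bv.
    have vB : ae_mu (tau v).
      have : v \in Bd by rewrite Bv inE.
      by rewrite inE.
    have SUT : [set e | sigma e != tO] = [set: E].
      apply/eqP; rewrite eqEcard subsetT cardsT -cSU.
      by move: Heq mE'; rewrite (eqP H1); clia.
    have inc_v e : src e = v \/ tgt e = v.
      have : e \in [set e | sigma e != tO] by rewrite SUT inE.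
      rewrite inE; case Hs: (sigma e) => // _.
        have : src e \in Bd by rewrite inE; exact: (U_src Hs).
        by rewrite Bv inE => /eqP; left.
      have : tgt e \in Bd by rewrite inE; exact: (S_tgt Hs).
      by rewrite Bv inE => /eqP; right.
    exists v; split => // w nwv; split.
      apply/negP => H; have : w \in Bd by rewrite inE.
      by rewrite Bv inE (negbTE nwv).
    case: (adj_edge nwv) => e [z [[se te]|[se te]]]; exists e.
      case: (inc_v e) => H; first by move: nwv; rewrite -se H eqxx.
      by right; rewrite se -H te.
    case: (inc_v e) => H; last by move: nwv; rewrite -te H eqxx.
    by left; rewrite te -H se.
  + left; have Hint : forall v, ~~ ae_mu (tau v).
      move=> v; apply/negP => H; move: H0; rewrite cards_eq0 => /eqP B0.
      have : v \in Bd by rewrite inE.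
      by rewrite B0 inE.
    case: (noBd_c0 Hint) => c1 c2.
    have n2 : #|V| = 2 by move: Heq; rewrite (eqP H0) c1 c2; clia.
    case: (two_nodes n2) => e [nl He Hv].
    by exists (src e), (tgt e), e; split => //; split; apply: Hint.
- case.
  + case=> x [y [e [nxy Hv He [se te] [ix iy]]]].
    have Hint : forall v, ~~ ae_mu (tau v) by move=> v; case: (Hv v) => ->.
    case: (noBd_c0 Hint) => -> ->.
    have -> : #|Bd| = 0.
      apply/eqP; rewrite cards_eq0; apply/eqP/setP => v; rewrite !inE.
      exact: negbTE (Hint v).
    have -> : #|V| = 2.
      rewrite -cardsT; have <- : [set x; y] = [set: V].
        by apply/setP => v; rewrite !inE; case: (Hv v) => ->; rewrite eqxx ?orbT.
      by rewrite cards2 nxy.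
    by rewrite subr0.
  + case=> v [vB Hw].
    have B1 : #|Bd| = 1.
      apply/eqP/cards1P; exists v; apply/setP => w; rewrite !inE.
      case: (eqVneq w v) => [->|nwv]; first by rewrite vB.
      by case: (Hw w nwv) => /negbTE ->.
    pose g e := if src e == v then tgt e else src e.
    have Hsub : [set~ v] \subset g @: [set e | sigma e != tO].
      apply/subsetP => w; rewrite in_setC1 => nwv.
      case: (Hw w nwv) => _ [e He]; apply/imsetP; exists e.
        rewrite inE; apply: (bd_noO vB).
        by case: He => -[se te]; [left|right].
      rewrite /g; case: He => -[se te]; first by rewrite se eqxx.
      by rewrite se (negbTE nwv).
    have c1 := subset_leq_card Hsub.
    have c2 := leq_imset_card g [set e | sigma e != tO].
    move: c1 c2; rewrite cardsC1 -cSU => c1 c2.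
    have -> : cS + cU = #|V|.-1 by move: c1 c2 cle mE'; clia.
    rewrite B1; have -> : (#|V| + 1 = 2 + #|V|.-1)%N by move: mE'; clia.
    by rewrite PoszD addrK.
Qed.

Lemma part2 : is_boundary_path tau ->
  (path_length V = 2 <-> formII src tgt tau).
Proof.
move=> Hb; rewrite /path_length; split.
  move=> n2; case: (two_nodes n2) => e [nl He Hv].
  by exists (src e), (tgt e), e; split.
case=> x [y [e [nxy Hv He _ _]]].
rewrite -cardsT; have <- : [set x; y] = [set: V].
  by apply/setP => v; rewrite !inE; case: (Hv v) => ->; rewrite eqxx ?orbT.
by rewrite cards2 nxy.
Qed.

End Main.

Theorem corollary3p11 :
  (forall (V E : finType) (src tgt : E -> V) (tau : V -> aedge) (sigma : E -> vtype),
      is_abstract_path src tgt tau sigma ->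
      is_legal tau sigma ->
      (path_weight tau = Posz 2 <-> formIa src tgt tau \/ formIb src tgt tau)) /\
  (forall (V E : finType) (src tgt : E -> V) (tau : V -> aedge) (sigma : E -> vtype),
      is_abstract_path src tgt tau sigma ->
      is_boundary_path tau ->
      (path_length V = 2 <-> formII src tgt tau)).
Proof.
split=> V E src tgt tau sigma HP.
  exact: (part1 HP).
exact: (part2 HP).
Qed.
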